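(* Let $m = p + 12k$ with $k \geq 0$ an integer and $p \in \{11,13,17,19\}$. Suppose $(X, Y, P_0, Q_0)$ is a type-1 basic set of dipaths of $G_{2m}$. For $j \in \{1,\dots,k-1\}$ let $P_j = \rho^{12j}(P_0)$ and $Q_j = \rho^{12j}(Q_0)$. Then $C^0 = X P_0 P_1 \cdots P_{k-1}$ and $C^1 = Y Q_0 Q_1 \cdots Q_{k-1}$ are type-1 directed $m$-cycles of $G_{2m}$, and $C^0 \cup C^1$ is a $\vec{C}_m$-factor of $G_{2m}$.
   Context: Let $m$ be odd. $G_{2m} = \vec{X}(m,\{1,3\}) \wr K^*_2$ is the digraph with vertex set $\{x_a, y_a : a \in \mathbb{Z}_m\}$ whose arcs are: $(u_a, v_b)$ for all $u,v \in \{x,y\}$ and $a,b$ with $b-a \equiv 1$ or $3 \pmod m$, together with $(x_a,y_a)$ and $(y_a,x_a)$ for all $a$. An arc from a vertex with subscript $a$ to one with subscript $b$ has difference equal to the representative of $b-a$ in $\{0,1,\dots,m-1\}$. A type-$k$ cycle is a directed $m$-cycle whose arc differences sum (as integers) to $km$. The map $\rho$ sends $x_i \mapsto x_{i+1}$, $y_i \mapsto y_{i+1}$ (subscripts mod $m$), applied vertexwise to dipaths. For a dipath $P$: $s(P)$ is its first vertex, $t(P)$ its last vertex, $\mathrm{len}(P)$ its number of arcs (a dipath of length $0$ is a single vertex); $PQ$ denotes concatenation when $t(P)=s(Q)$. With $m = p+12k$, set $V_0 = \{x_j, y_j : 0 \le j \le p-1\}$ and, for $1 \le i \le k$, $V_i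 = \{x_j, y_j : p+12(i-1) \le j \le p+12i-1\}$. A 4-tuple $(X,Y,R,S)$ of dipaths (or, when $k=0$, closed dipaths) of $G_{2m}$ is a type-1 basic set of dipaths if: (C1) $R$ and $S$ are vertex-disjoint; if $k\ge1$ then $X$ and $Y$ are vertex-disjoint dipaths, while if $k=0$ they are vertex-disjoint type-1 directed cycles; (C2) $s(X)=\rho^{-p}(t(X))$ and $s(Y)=\rho^{-p}(t(Y))$; (C3) $\mathrm{len}(X)=\mathrm{len}(Y)=p$; $\mathrm{len}(R)=\mathrm{len}(S)=12$ if $k\ge1$ and $\mathrm{len}(R)=\mathrm{len}(S)=0$ if $k=0$; (C4) each of $X,Y$ has its source and internal vertices in $V_0$ and its terminal vertex equal to $x_t$ or $y_t$ for some $t\in\{p,p+1,p+2\}$; (C5) $t(X)=s(R)$ and $t(Y)=s(S)$; (C6) if $k\ge1$ and $P\in\{R,S\}$ has $s(P)=x_t$ (resp. $y_t$), then $t(P)=x_{t+12}$ (resp. $y_{t+12}$), and all internal vertices of $P$ lie in $V_1$. A $\vec{C}_m$-factor is a spanning subdigraph that is a disjoint union of directed $m$-cycles. *)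

(* Defs.v *)
From mathcomp Require Import all_boot.
Set Implicit Arguments. Unset Strict Implicit. Unset Printing Implicit Defensive.

(* Vertices of G_{2m}: (false, a) = x_a, (true, a) = y_a, with 0 <= a < m. *)
Definition vert := (bool * nat)%type.
Definition vdef : vert := (false, 0).

Definition valid (m : nat) (v : vert) : bool := v.2 < m.

Definition vdiff (m : nat) (u v : vert) : nat := (v.2 + m - u.2) %% m.

(* arcs of G_{2m} = X(m,{1,3}) wr K_2^* *)
Definition arc (m : nat) (u v : vert) : bool :=
  [&& valid m u, valid m v &
   [|| vdiff m u v == 1 %% m, vdiff m u v == 3 %% m
     | (u.2 == v.2) && (u.1 != v.1)]].

Definition rho (m j : nat) (v : vert) : vert := (v.1, (v.2 + j) %% m).
Definition rhoinv (m j : nat) (v : vert) : vert := (v.1, (v.2 + (m - j %% m)) %% m).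
Definition rhoP (m j : nat) (P : seq vert) : seq vert := map (rho m j) P.

Definition src (P : seq vert) : vert := head vdef P.
Definition tgt (P : seq vert) : vert := last vdef P.
Definition len (P : seq vert) : nat := (size P).-1.
Definition internal (P : seq vert) : seq vert := take (size P - 2) (behead P).

Definition is_dipath (m : nat) (P : seq vert) : bool :=
  [&& 0 < size P, all (valid m) P, path (arc m) (src P) (behead P) & uniq P].

Definition is_closed_dipath (m : nat) (C : seq vert) : bool :=
  [&& 1 < size C, all (valid m) C, path (arc m) (src C) (behead C),
      src C == tgt C & uniq (behead C)].

Definition is_mcycle (m : nat) (C : seq vert) : bool :=
  is_closed_dipath m C && (len C == m).

Definition diffsum (m : nat) (C : seq vert) : nat :=
  sumn (map (fun e => vdiff m e.1 e.2) (zip C (behead C))).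

Definition is_type_cycle (m t : nat) (C : seq vert) : bool :=
  is_mcycle m C && (diffsum m C == t * m).

Definition vdisjoint (P Q : seq vert) : bool := all (fun v => v \notin Q) P.

Definition catP (P Q : seq vert) : seq vert := P ++ behead Q.

Definition is_Cm_factor (m : nat) (cs : seq (seq vert)) : Prop :=
  (forall C, C \in cs -> is_mcycle m C) /\
  (forall i j, i < size cs -> j < size cs -> i != j ->
      vdisjoint (nth [::] cs i) (nth [::] cs j)) /\
  (forall v : vert, valid m v -> exists2 C, C \in cs & v \in C).

Definition inV (p i : nat) (v : vert) : bool :=
  if i == 0 then v.2 < p else (p + 12 * (i - 1) <= v.2) && (v.2 <= p + 12 * i - 1).

Definition basic_set1 (m p k : nat) (X Y R S : seq vert) : Prop :=
  is_dipath m R /\ is_dipath m S /\ vdisjoint R S /\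
  (if 1 <= k then is_dipath m X /\ is_dipath m Y /\ vdisjoint X Y
   else is_type_cycle m 1 X /\ is_type_cycle m 1 Y /\ vdisjoint X Y) /\
  src X = rhoinv m p (tgt X) /\ src Y = rhoinv m p (tgt Y) /\
  len X = p /\ len Y = p /\
  (if 1 <= k then len R = 12 /\ len S = 12 else len R = 0 /\ len S = 0) /\
  (forall P, P \in [:: X; Y] ->
     all (inV p 0) (belast (src P) (behead P)) /\
     (tgt P).2 \in [:: p %% m; p.+1 %% m; p.+2 %% m]) /\
  tgt X = src R /\ tgt Y = src S /\
  (1 <= k -> forall P, P \in [:: R; S] ->
     tgt P = ((src P).1, ((src P).2 + 12) %% m) /\ all (inV p 1) (internal P)).

Definition chain (m k : nat) (X P0 : seq vert) : seq vert :=
  foldl catP X [seq rhoP m (12 * j) P0 | j <- iota 0 k].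

(* Main.v *)
Require Import Defs.
From mathcomp Require Import all_boot.
From mathcomp Require Import zify.
Require Import Defs.
Set Implicit Arguments. Unset Strict Implicit.

Fixpoint ndesc (x : vert) (s : seq vert) : nat :=
  if s is y :: s' then (y.2 < x.2) + ndesc y s' else 0.
Fixpoint dsum (m : nat) (x : vert) (s : seq vert) : nat :=
  if s is y :: s' then vdiff m x y + dsum m y s' else 0.

Lemma diffsum_cons m x s : diffsum m (x :: s) = dsum m x s.
Proof. by elim: s x => [|y s IH] x //=; rewrite /diffsum /= -IH. Qed.

Lemma vdiffE m u v : u.2 < m -> v.2 < m ->
  vdiff m u v = if v.2 < u.2 then v.2 + m - u.2 else v.2 - u.2.
Proof.
move=> hu hv; rewrite /vdiff; case: ltnP => h.
  by rewrite modn_small //; lia.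
have -> : v.2 + m - u.2 = (v.2 - u.2) + m by lia.
by rewrite modnDr modn_small //; lia.
Qed.

Lemma dsum_ndesc m x s : all (valid m) (x :: s) ->
  x.2 + dsum m x s = (last x s).2 + m * ndesc x s.
Proof.
elim: s x => [|y s IH] x /=.
  by move=> _; rewrite muln0.
case/and3P=> hx hy hs.
have := IH y; rewrite /= hy hs => /(_ isT) IHy.
rewrite /valid in hx hy.
rewrite vdiffE // mulnDr.
case: ltnP => h /=; lia.
Qed.

Lemma ndesc_cat x s1 s2 : ndesc x (s1 ++ s2) = ndesc x s1 + ndesc (last x s1) s2.
Proof. by elim: s1 x => [|y s IH] x //=; rewrite IH addnA. Qed.

Lemma ndesc_rcons x s z : ndesc x (rcons s z) = ndesc x s + (z.2 < (last x s).2).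
Proof. by rewrite -cats1 ndesc_cat /= addn0. Qed.

Lemma arc_desc m u v : arc m u v -> v.2 < u.2 -> v.2 + m <= u.2 + 3.
Proof.
case/and3P=> hu hv; rewrite /valid in hu hv => H lt.
have E := vdiffE hu hv; rewrite lt in E.
case/or3P: H.
- rewrite E => /eqP e; have := leq_mod 1 m; lia.
- rewrite E => /eqP e; have := leq_mod 3 m; lia.
- case/andP=> /eqP e _; lia.
Qed.

Lemma nodesc_lo m x s : path (arc m) x s ->
  all (fun v => v.2 + 3 < m) (belast x s) -> ndesc x s = 0.
Proof.
elim: s x => [|y s IH] x //= /andP[a p] /andP[hx hb].
rewrite IH // addn0; case: ltnP => // lt.
have := arc_desc a lt; lia.
Qed.

Lemma nodesc_hi m x s : 15 <= m -> path (arc m) x s ->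
  all (fun v => m <= v.2 + 12) (x :: s) -> ndesc x s = 0.
Proof.
move=> hm; elim: s x => [|y s IH] x //= /andP[a p] /and3P[hx hy hb].
rewrite IH //=; last by rewrite hy.
rewrite addn0; case: ltnP => // lt.
have := arc_desc a lt; case/and3P: a => /= h1 h2 _; rewrite /valid in h1 h2; lia.
Qed.

Lemma rho_valid m j v : 0 < m -> valid m (rho m j v).
Proof. by move=> h; rewrite /valid /= ltn_mod. Qed.

Lemma rhoD m a b v : rho m a (rho m b v) = rho m (b + a) v.
Proof. by rewrite /rho /= modnDml addnA. Qed.

Lemma modeq_rho m j a b : a < m -> b < m -> ((a + j) %% m == (b + j) %% m) = (a == b).
Proof.
move=> ha hb; apply/idP/idP; last by move/eqP->.
by rewrite -/(_ == _ %[mod m]) eqn_modDr !modn_small.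
Qed.

Lemma vdiff_rho m j u v : u.2 < m -> v.2 < m ->
  vdiff m (rho m j u) (rho m j v) = vdiff m u v.
Proof.
move=> hu hv; rewrite /vdiff /=.
set ru := (u.2 + j) %% m; set rv := (v.2 + j) %% m.
have hru : ru < m by rewrite ltn_mod; lia.
apply/eqP; rewrite -(eqn_modDr (u.2 + j)).
have E2 : v.2 + m - u.2 + (u.2 + j) = (v.2 + j) + m by lia.
rewrite E2 modnDr -modnDmr -/ru subnK; last by lia.
by rewrite modnDr modn_mod.
Qed.

Lemma arc_rho m j u v : arc m u v -> arc m (rho m j u) (rho m j v).
Proof.
case/and3P=> hu hv H; have m0 : 0 < m by rewrite /valid in hu; lia.
rewrite /arc !rho_valid //= vdiff_rho //.
by rewrite modeq_rho.
Qed.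

Lemma path_rho m j x s : path (arc m) x s -> path (arc m) (rho m j x) (map (rho m j) s).
Proof.
elim: s x => [|y s IH] x //= /andP[a p]; rewrite arc_rho //=; exact: IH.
Qed.

Lemma rho_inj m j u v : valid m u -> valid m v -> rho m j u = rho m j v -> u = v.
Proof.
case: u v => [b a] [b' a']; rewrite /valid /rho /= => hu hv [-> /eqP].
by rewrite modeq_rho // => /eqP ->.
Qed.


Lemma factor m C0 C1 : is_mcycle m C0 -> is_mcycle m C1 ->
  (forall v, v \in C0 -> v \notin C1) -> is_Cm_factor m [:: C0; C1].
Proof.
move=> h0 h1 H.
have H' : forall v, v \in C1 -> v \notin C0.
  by move=> v a; apply/negP => b; move: (H v b); rewrite a.
split.
  by move=> C; rewrite !inE => /orP[]/eqP->.
split.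
  move=> [|[|i]] [|[|j]] //= _ _ _; apply/allP => v hv; [exact: H | exact: H'].
move: h0 h1 => /andP[/and5P[_ v0 _ _ u0] /eqP l0] /andP[/and5P[_ v1 _ _ u1] /eqP l1].
set s01 := behead C0 ++ behead C1.
set V := [seq (b, a) | b <- [:: false; true], a <- iota 0 m].
have us : uniq s01.
  rewrite cat_uniq u0 u1 andbT /=; apply/hasPn => v a; apply/negP => b.
  by move: (H v (mem_behead b)); rewrite (mem_behead a).
have sub : {subset s01 <= V}.
  move=> [b a]; rewrite mem_cat => /orP[] /mem_behead hv.
    move/allP: v0 => /(_ _ hv); rewrite /valid /= => ha.
    by apply/allpairsP; exists (b, a); rewrite /= mem_iota ha; case: (b) => /=.
  move/allP: v1 => /(_ _ hv); rewrite /valid /= => ha.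
  by apply/allpairsP; exists (b, a); rewrite /= mem_iota ha; case: (b) => /=.
have sz : size V <= size s01.
  by rewrite size_allpairs size_iota size_cat !size_behead -/(len C0) -/(len C1) l0 l1 /=; lia.
have [_ E] := uniq_min_size us sub sz.
move=> [b a]; rewrite /valid /= => ha.
have : (b, a) \in V by apply/allpairsP; exists (b, a); rewrite /= mem_iota ha; case: (b) => /=.
rewrite -E mem_cat => /orP[] /mem_behead hv.
  by exists C0; rewrite ?inE ?eqxx.
by exists C1; rewrite ?inE ?eqxx ?orbT.
Qed.

Lemma chainS m n X P0 : chain m n.+1 X P0 = catP (chain m n X P0) (rhoP m (12 * n) P0).
Proof.
rewrite /chain.
have -> : iota 0 n.+1 = iota 0 n ++ [:: n] by rewrite -addn1 iotaD.
by rewrite map_cat foldl_cat.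
Qed.

Lemma uniq_belast (x : vert) s : uniq (x :: s) -> uniq (belast x s).
Proof.
case/lastP: s => [|s y] //; rewrite belast_rcons -rcons_cons rcons_uniq.
by case/andP.
Qed.

Lemma closed_split (x : vert) s : 0 < size s -> last x s = x ->
  exists s', s = rcons s' x /\ belast x s = x :: s'.
Proof.
case/lastP: s => [|s y] //; rewrite last_rcons => _ ->.
by exists s; rewrite belast_rcons.
Qed.

Lemma chain_ok m p K X P0 :
  11 <= p -> m = p + 12 * K -> 1 <= K ->
  is_dipath m X -> is_dipath m P0 -> len X = p -> len P0 = 12 ->
  src X = rhoinv m p (tgt X) ->
  all (inV p 0) (belast (src X) (behead X)) ->
  (tgt X).2 \in [:: p %% m; p.+1 %% m; p.+2 %% m] ->
  tgt X = src P0 ->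
  tgt P0 = ((src P0).1, ((src P0).2 + 12) %% m) ->
  all (inV p 1) (internal P0) ->
  is_type_cycle m 1 (chain m K X P0) /\
  (forall v, v \in chain m K X P0 ->
     (v \in belast (src X) (behead X) /\ v.2 < p) \/
     exists j, j < K /\ exists2 u, u \in belast (src P0) (behead P0) &
        p <= u.2 <= p + 11 /\ v = (u.1, u.2 + 12 * j)).
Proof.
move=> hp hm hK dX dP lX lP sX bX tX XP tP iP.
have m23 : 23 <= m by lia.
case: X dX lX sX bX tX XP => [|x0 sx] //= dX lX sX bX tX XP.
case: P0 dP lP tP iP XP => [|z sP] // dP lP tP iP XP.
case/lastP: sP dP lP tP iP XP => [|s' y] dP lP tP iP XP.
  by rewrite /len in lP.
rewrite /len /= size_rcons in lP.
have ss' : size s' = 11 by lia.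
rewrite /tgt /src /= last_rcons in tP XP.
rewrite /internal /= size_rcons -addn1 -cats1 in iP.
move: iP; set q := (X in take X _) => iP.
have E : q = size s' by rewrite /q; timeout 30 lia.
rewrite E take_size_cat // in iP.
rewrite /src /tgt /= in sX bX tX.
rewrite /src /= belast_rcons.
set t := (last x0 sx).2 in tX.
have ht : p <= t <= p + 2.
  have e0 : p %% m = p by rewrite modn_small //; timeout 30 lia.
  have e1 : p.+1 %% m = p.+1 by rewrite modn_small //; timeout 30 lia.
  have e2 : p.+2 %% m = p.+2 by rewrite modn_small //; timeout 30 lia.
  move: tX; rewrite e0 e1 e2 !inE.
  by case/or3P => /eqP ->; timeout 30 lia.
have Hzs : forall u : vert, u \in z :: s' -> p <= u.2 <= p + 11.
  move=> u; rewrite inE => /orP[/eqP -> | hu].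
    by rewrite -XP -/t; timeout 30 lia.
  by move/allP: iP => /(_ u hu); rewrite /inV /=; timeout 30 lia.
have m0 : 0 < m by lia.
have rhoE : forall n (u : vert), n < K -> u \in z :: s' -> rho m (12 * n) u = (u.1, u.2 + 12 * n).
  move=> n u hn hu; have := Hzs u hu => hb; rewrite /rho modn_small //; move: hb hn hm; case: u {hu} => a b /=; clear; lia.
case/and4P: dP => _ vP pP uP.
have uzs : uniq (z :: s') by move: uP; rewrite -rcons_cons rcons_uniq => /andP[].
have inv : forall n, n <= K -> exists s, chain m n (x0 :: sx) (z :: rcons s' y) = x0 :: s /\
   all (valid m) (x0 :: s) /\ path (arc m) x0 s /\ last x0 s = rho m (12 * n) z /\
   uniq (belast x0 s) /\ all (fun v => v.2 < p + 12 * n) (belast x0 s) /\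
   (forall v, v \in belast x0 s -> (v \in belast x0 sx /\ v.2 < p) \/
       exists j, j < n /\ exists2 u, u \in z :: s' & p <= u.2 <= p + 11 /\ v = (u.1, u.2 + 12 * j)) /\
   ndesc x0 s = (n == K) /\ size s = p + 12 * n.
  elim=> [_ | n IH hn].
    case/and4P: dX => _ vX pX uX.
    have bX' : forall v : vert, v \in belast x0 sx -> v.2 < p.
      by move=> v hv; move/allP: bX => /(_ v hv); rewrite /inV.
    exists sx; split; first done. split; first done. split; first done.
    split.
      rewrite -XP /rho muln0 addn0 modn_small; last first.
        have ht' : p <= (last x0 sx).2 <= p + 2 := ht.
        by move: ht' hm hK; case: (last x0 sx) => a b /=; clear; lia.
      by case: (last x0 sx).
    split; first exact: uniq_belast.
    split; first by apply/allP => -[b a] /bX' /=; clear; lia.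
    split; first by move=> v hv; left; split => //; exact: bX'.
    split.
      rewrite (nodesc_lo pX); last by apply/allP => -[b a] /bX' /=; move: hm hK; clear; lia.
      have -> : (0 == K) = false by apply/eqP; move: hK; clear; lia.
      done.
    by rewrite /len /= in lX; move: lX; clear; lia.
  have [s [eC [vC [pC [lC [uC [bC [mC [nC sC]]]]]]]]] := IH (ltnW hn).
  set R := rho m (12 * n).
  have RyE : R y = rho m (12 * n.+1) z by rewrite /R tP (rhoD m (12 * n) 12 z) mulnS.
  have pR : path (arc m) (R z) (rcons (map R s') (R y)) by rewrite -map_rcons; exact: path_rho.
  have BP : belast (R z) (rcons (map R s') (R y)) = map (fun u => (u.1, u.2 + 12 * n)) (z :: s').
    rewrite belast_rcons /= /R rhoE ?mem_head //; congr (_ :: _).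
    by apply/eq_in_map => u hu; apply: rhoE => //; rewrite inE hu orbT.
  have BE : belast x0 (s ++ rcons (map R s') (R y)) = belast x0 s ++ map (fun u => (u.1, u.2 + 12*n)) (z :: s').
    by rewrite belast_cat lC -BP.
  exists (s ++ rcons (map R s') (R y)).
  split; first by rewrite chainS eC /catP /rhoP /= map_rcons.
  split.
    move: vC; rewrite /= all_cat all_rcons => /andP[-> ->] /=.
    rewrite rho_valid //=; apply/allP => w /mapP [u _ ->]; exact: rho_valid.
  split; first by rewrite cat_path pC lC.
  split; first by rewrite last_cat last_rcons.
  split.
    rewrite BE cat_uniq uC andTb; apply/andP; split.
      apply/hasPn => w /mapP [u hu ->]; apply/negP => hw.
      move/allP: bC => /(_ _ hw) /= h1; have h2 := Hzs u hu; move: h1 h2; clear; case: u => a b /=; timeout 30 lia.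
    rewrite map_inj_uniq //; move=> [a b] [c d] [-> e]; congr pair; clear -e; timeout 30 lia.
  split.
    rewrite BE all_cat; apply/andP; split.
      by apply/allP => -[a b] hv; move/allP: bC => /(_ _ hv) /=; move=> h; clear -h; timeout 30 lia.
    by apply/allP => w /mapP [u hu ->] /=; have := Hzs u hu; clear; case: u => a b /=; timeout 30 lia.
  split.
    move=> v; rewrite BE mem_cat => /orP[hv | /mapP [u hu ->]].
      case: (mC v hv) => [h | [j [hj h]]]; [by left | right; exists j; split; [exact: ltnW | exact: h]].
    by right; exists n; split => //; exists u => //; split => //; exact: Hzs.
  split.
    rewrite ndesc_cat nC lC.
    have -> : (n == K) = false by apply/eqP; move: hn; clear; lia.
    case: (ltnP n.+1 K) => hn1.
      rewrite (nodesc_lo pR); last first.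
        by rewrite BP; apply/allP => w /mapP [u hu ->] /=; have := Hzs u hu; move: hm hn1; clear; case: u => a b /=; lia.
      have -> : (n.+1 == K) = false by apply/eqP; move: hn1; clear; lia.
      done.
    have -> : (n.+1 == K) = true by apply/eqP; move: hn hn1; clear; lia.
    rewrite ndesc_rcons.
    have pR' : path (arc m) (R z) (map R s') by move: pR; rewrite -cats1 cat_path => /andP[].
    have hall : all (fun v => m <= v.2 + 12) (R z :: map R s').
      rewrite -(belast_rcons (R z) (map R s') (R y)) BP.
      by apply/allP => w /mapP [u hu ->] /=; have := Hzs u hu; move: hm hn hn1; clear; case: u => a b /=; lia.
    rewrite (nodesc_hi _ pR' hall); last by move: m23; clear; lia.
    have hl := mem_last (R z) (map R s').
    move/allP: hall => /(_ _ hl) hl0.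
    have hl' : m <= (last (R z) (map R s')).2 + 12 := hl0.
    have -> : (R y).2 < (last (R z) (map R s')).2.
      rewrite RyE /=.
      have hz := Hzs z (mem_head _ _).
      have -> : z.2 + 12 * n.+1 = (z.2 - p) + m by move: hz hm hn hn1; clear; lia.
      have hz2 : z.2 <= p + 2 by rewrite -XP; move: ht; rewrite /t; clear; lia.
      rewrite modnDr modn_small; move: hz hz2 hp hl' hm hn hn1; clear; lia.
    done.
  by rewrite size_cat size_rcons size_map ss' sC; clear; lia.
have [s [eC [vC [pC [lC [uC [bC [mC [nC sC]]]]]]]]] := inv K (leqnn K).
clear inv.
have cl : last x0 s = x0.
  rewrite lC sX XP /rhoinv /rho (modn_small (_ : p < m)); last by move: hm hK; clear; lia.
  by have -> : m - p = 12 * K by move: hm; clear; lia.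
have [s'' [es bs]] : exists s'', s = rcons s'' x0 /\ belast x0 s = x0 :: s''.
  by apply: closed_split => //; rewrite sC; move: hp; clear; lia.
rewrite eC; split.
  apply/andP; split; last first.
    rewrite diffsum_cons; have := dsum_ndesc vC; rewrite cl nC eqxx; clear; lia.
  apply/andP; split; last by rewrite /len /= sC hm.
  apply/and5P; split => //.
  - by rewrite /= sC; move: hp; clear; lia.
  - by rewrite /src /tgt /= cl.
  - by move: uC; rewrite /= bs es rcons_uniq.
move=> v hv; apply: mC; rewrite bs; move: hv; rewrite es -rcons_cons mem_rcons.
by rewrite inE => /orP[/eqP -> | ]; rewrite ?mem_head // => h; rewrite inE h orbT.
Qed.

Lemma mem_bl (P : seq vert) v : v \in belast (src P) (behead P) -> v \in P.
Proof. by case: P => [|x s] //=; exact: mem_belast. Qed.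

Theorem mainTheorem6 (m p k : nat) (X Y P0 Q0 : seq vert) :
  p \in [:: 11; 13; 17; 19] -> m = p + 12 * k ->
  basic_set1 m p k X Y P0 Q0 ->
  is_type_cycle m 1 (chain m k X P0) /\
  is_type_cycle m 1 (chain m k Y Q0) /\
  is_Cm_factor m [:: chain m k X P0; chain m k Y Q0].
Proof.
move=> hpin hm B.
have hp : 11 <= p by move: hpin; rewrite !inE => /or4P[]/eqP->.
case: B => [dR [dS [dRS [C1 [sX [sY [lX [lY [C3 [C4 [XR [YS C6]]]]]]]]]]]].
case: (posnP k) => [k0 | kpos].
  subst k; simpl in C1; case: C1 => [tX [tY dXY]].
  split => //; split => //; apply: factor.
  - by case/andP: tX.
  - by case/andP: tY.
  - by move=> v hv; move/allP: dXY => /(_ v hv).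
rewrite kpos in C1 C3; case: C1 => [dX [dY dXY]]; case: C3 => [lR lS].
have [bX tXs] := C4 X (mem_head _ _).
have hY : Y \in [:: X; Y] by rewrite !inE eqxx orbT.
have [bY tYs] := C4 Y hY.
have [tR iR] := C6 kpos P0 (mem_head _ _).
have hS : Q0 \in [:: P0; Q0] by rewrite !inE eqxx orbT.
have [tS iS] := C6 kpos Q0 hS.
have [cX mX] := chain_ok hp hm kpos dX dR lX lR sX bX tXs XR tR iR.
have [cY mY] := chain_ok hp hm kpos dY dS lY lS sY bY tYs YS tS iS.
split => //; split => //; apply: factor.
- by case/andP: cX.
- by case/andP: cY.
move=> v h0; apply/negP => h1.
case: (mX v h0) (mY v h1) => [[a0 b0] | [j [hj [[u1 u2] hu [hu' e0]]]]]
  [[a1 b1] | [j' [hj' [[w1 w2] hw [hw' e1]]]]].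
- by move/allP: dXY => /(_ v (mem_bl a0)); rewrite (mem_bl a1).
- by move: b0 hw'; rewrite e1 /=; clear; lia.
- by move: b1 hu'; rewrite e0 /=; clear; lia.
rewrite e0 in e1; case: e1 => e11 e12.
have ejj : j = j' by move: e12 hu' hw'; rewrite /=; clear; lia.
have e2 : u2 = w2 by move: e12; rewrite ejj; clear; lia.
subst.
by move/allP: dRS => /(_ _ (mem_bl hu)); rewrite (mem_bl hw).
Qed.
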